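(* For $n\ge 4$, the dom-bondage number of the cycle $C_n$ is $B_{dom}(C_n)=3$ if $n\equiv 2\pmod 4$, and $B_{dom}(C_n)=2$ otherwise.
   Context: A dominated coloring of a graph is a proper coloring in which every color class is dominated by at least one vertex, i.e. for each color class $C$ there is a vertex adjacent to every vertex of $C$; $\chi_{dom}(G)$ is the minimum number of colors in a dominated coloring. The dom-bondage number $B_{dom}(G)$ is the minimum number of edges of $G$ whose removal changes the dominated chromatic number of $G$. *)

(* Defs.v *)
From mathcomp Require Import all_boot.
Set Implicit Arguments. Unset Strict Implicit. Unset Printing Implicit Defensive.

Section Graphs.
Variable T : finType.

(* A finite simple graph on vertex set T is given by its edge set E, a set of
   2-element subsets of T.  Adjacency: *)
Definition adj (E : {set {set T}}) (x y : T) : bool :=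
  (x != y) && ([set x; y] \in E).

Definition dominated_coloring (E : {set {set T}}) (k : nat) (c : {ffun T -> 'I_k}) : bool :=
  [forall x, forall y, adj E x y ==> (c x != c y)] &&
  [forall i : 'I_k, exists v, forall x, (c x == i) ==> adj E v x].

Definition dom_colorable (E : {set {set T}}) (k : nat) : bool :=
  [exists c : {ffun T -> 'I_k}, dominated_coloring E c].

Definition no_isolated (E : {set {set T}}) : bool :=
  [forall x, exists y, adj E x y].

(* For
   graphs without isolated vertices a dominated coloring with #|T| colors always
   exists, so this is the true minimum; it is only used for such graphs. *)
Definition chi_dom (E : {set {set T}}) : nat :=
  \big[minn/#|T|]_(k < #|T|.+1 | dom_colorable E k) k.

(* F is a set of edges whose removal changes the dominated chromatic number
   (the resulting graph being required to have no isolated vertices, so that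
   its dominated chromatic number is defined). *)
Definition dom_changing (E F : {set {set T}}) : bool :=
  [&& F \subset E, no_isolated (E :\: F) & chi_dom (E :\: F) != chi_dom E].

Definition is_dom_bondage (E : {set {set T}}) (b : nat) : Prop :=
  (exists F, dom_changing E F /\ #|F| = b) /\
  (forall F, dom_changing E F -> b <= #|F|).

End Graphs.

Definition cycle_edges (n : nat) : {set {set 'I_n}} :=
  [set [set i; ordS i] | i : 'I_n].

(* Main.v *)
Require Import Defs.
From mathcomp Require Import all_boot.
From mathcomp Require Import zify.
Set Implicit Arguments. Unset Strict Implicit. Unset Printing Implicit Defensive.

Section ChiLemmas.
Variable T : finType.
Lemma chi_dom_eq (G : {set {set T}}) m :
  dom_colorable G m -> m <= #|T| -> (forall k, dom_colorable G k -> m <= k) ->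
  chi_dom G = m.
Proof.
move=> Hm HmT Hall; apply/eqP; rewrite eqn_leq; apply/andP; split.
  rewrite /chi_dom.
  have : Ordinal (HmT : m < #|T|.+1) \in index_enum 'I_#|T|.+1 by rewrite mem_index_enum.
  elim: (index_enum _) => [//|a r IH]; rewrite inE big_cons.
  case/orP => [/eqP <-|/IH Hr]; first by rewrite Hm geq_minl.
  by case: ifP => _ //; rewrite geq_min Hr orbT.
rewrite /chi_dom; apply: (big_ind (fun x => m <= x)) => //.
  by move=> x y Hx Hy; rewrite leq_min Hx Hy.
by move=> k Hk; apply: Hall.
Qed.

Lemma chi_dom_col (G : {set {set T}}) :
  chi_dom G < #|T| -> dom_colorable G (chi_dom G).
Proof.
rewrite /chi_dom.
have : (\big[minn/#|T|]_(k < #|T|.+1 | dom_colorable G k) k == #|T|) ||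
       dom_colorable G (\big[minn/#|T|]_(k < #|T|.+1 | dom_colorable G k) k).
  apply: (big_ind (fun x => (x == #|T|) || dom_colorable G x)) => //.
  - by rewrite eqxx.
  - by move=> x y Hx Hy; case: (leqP x y).
  - by move=> k ->; rewrite orbT.
by case/orP => [/eqP ->|//]; rewrite ltnn.
Qed.

Lemma card_partition_col k (c : {ffun T -> 'I_k}) (A : {set T}) :
  #|A| = \sum_(i < k) #|[set x in A | c x == i]|.
Proof.
rewrite -sum1_card (partition_big c xpredT) //=; apply: eq_bigr => j _.
by rewrite -sum1_card; apply: eq_bigl => x; rewrite inE.
Qed.

Lemma adj_sym (E : {set {set T}}) x y : adj E x y = adj E y x.
Proof. by rewrite /adj eq_sym setUC. Qed.
End ChiLemmas.

Lemma cnt_even m : \sum_(i < m) (~~ odd i : nat) = m.+1 %/ 2.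
Proof.
elim: m => [|m IH]; first by rewrite big_ord0.
rewrite big_ord_recr /= IH.
have := modn2 m; case: (odd m) => /= H; clear IH; lia.
Qed.

Section Cycle.
Variable n : nat.
Hypothesis n3 : 2 < n.
Local Notation E := (cycle_edges n).
Definition ed (j : 'I_n) : {set 'I_n} := [set j; ordS j].

Lemma ordS_cases (x : 'I_n) :
  (x.+1 = n /\ val (ordS x) = 0) \/ (x.+1 < n /\ val (ordS x) = x.+1).
Proof.
rewrite /=; case: (ltngtP x.+1 n) => H.
- by right; rewrite modn_small.
- by have := ltn_ord x; lia.
- by left; rewrite H modnn.
Qed.

Lemma ed_in_E j : ed j \in E.
Proof. exact: imset_f. Qed.

Lemma ordS_neq (x : 'I_n) : x != ordS x.
Proof.
apply/eqP => /(congr1 val) H; move: H.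
by case: (ordS_cases x) => -[A ->] /=; lia.
Qed.

Lemma ed_inj : injective ed.
Proof.
move=> j j' H.
have Hj : j \in ed j' by rewrite -H set21.
have Hj2 : ordS j \in ed j' by rewrite -H set22.
case/set2P: Hj => [//|Hj]; case/set2P: Hj2 => [Hj2|/ordS_inj //].
have := ordS_cases j; have := ordS_cases j'.
move: (congr1 val Hj) (congr1 val Hj2) => /= A B.
have := ltn_ord j; have := ltn_ord j'. 
case: (ltngtP j.+1 n); case: (ltngtP j'.+1 n); lia.
Qed.

Lemma adj_sub (G : {set {set 'I_n}}) v x :
  G \subset E -> adj G v x -> (x = ordS v) \/ (v = ordS x).
Proof.
move=> HG /andP [nvx Hin].
case/imsetP: (subsetP HG _ Hin) => j _ Hj.
have Hv : v \in [set j; ordS j] by rewrite -Hj set21.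
have Hx : x \in [set j; ordS j] by rewrite -Hj set22.
case/set2P: Hv => Hv; case/set2P: Hx => Hx; subst.
- by rewrite eqxx in nvx.
- by left.
- by right.
- by rewrite eqxx in nvx.
Qed.


Section Col.
Variables (G : {set {set 'I_n}}) (k : nat) (c : {ffun 'I_n -> 'I_k}).
Hypothesis HG : G \subset E.
Hypothesis Hc : dominated_coloring G c.

Lemma class_dom i : exists v, forall x, c x == i -> adj G v x.
Proof.
case/andP: Hc => _ /forallP /(_ i) /existsP [v /forallP Hv].
by exists v => x; apply/implyP.
Qed.

Lemma class_le2 (A : {set 'I_n}) i : #|[set x in A | c x == i]| <= 2.
Proof.
have [v Hv] := class_dom i.
apply: (leq_trans (subset_leq_card (_ : _ \subset [set ordS v; ord_pred v]))).
  apply/subsetP => x; rewrite inE => /andP [_ Hx].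
  case: (adj_sub HG (Hv x Hx)) => [->|->]; first by rewrite set21.
  by rewrite ordSK set22.
by rewrite cards2; case: (_ != _).
Qed.

Lemma LB (X : {set 'I_n}) :
  (forall x y, x \in X -> c y = c x -> y = x) -> n + #|X| <= 2 * k.
Proof.
move=> Hs.
have Hn : n = \sum_(i < k) #|[set x in [set: 'I_n] | c x == i]|.
  by rewrite -card_partition_col cardsT card_ord.
have HX : #|X| = \sum_(i < k) (i \in c @: X : nat).
  rewrite -(card_in_imset (f := c)); last first.
    by move=> x y Hx Hy Hxy; apply: esym; apply: (Hs x y Hx (esym Hxy)).
  by rewrite -sum1_card big_mkcond /=; apply: eq_bigr => i _; case: (_ \in _).
rewrite HX {1}Hn -big_split /= mulnC -[k in k * 2]card_ord -sum_nat_const.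
apply: leq_sum => i _.
case: imsetP => [[x Hx ->]|_]; last by rewrite addn0 class_le2.
have : #|[set y in [set: 'I_n] | c y == c x]| <= 1.
  rewrite -(cards1 x); apply: subset_leq_card; apply/subsetP => y.
  by rewrite !inE => /eqP /(Hs x y Hx) ->.
by move=> H; rewrite addn1 ltnS.
Qed.

Lemma adj_odd v x : ~~ odd n -> adj G v x -> odd x = ~~ odd v.
Proof.
move=> Hn /(adj_sub HG) [->|->] /=; rewrite odd_mod ?(negbTE Hn) //=.
by rewrite negbK.
Qed.



Lemma LB_par : n %% 4 = 2 -> n <> 2 * k.
Proof.
move=> H4 Hk.
have Hne : ~~ odd n by apply/negP => Ho; move: (modn2 n); rewrite Ho; lia.
have Hall : forall i, #|[set x in [set: 'I_n] | c x == i]| = 2.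
  have Hs : \sum_(i < k) (2 - #|[set x in [set: 'I_n] | c x == i]|) = 0.
    have : \sum_(i < k) (2 - #|[set x in [set: 'I_n] | c x == i]|)
         + \sum_(i < k) #|[set x in [set: 'I_n] | c x == i]| = k * 2.
      rewrite -big_split /= -[k in k * 2]card_ord -sum_nat_const.
      by apply: eq_bigr => i _; rewrite subnK // class_le2.
    rewrite -card_partition_col cardsT card_ord; lia.
  move=> i; move/eqP: Hs; rewrite sum_nat_eq0 => /forallP /(_ i) /=; have Hle := class_le2 [set: 'I_n] i.
  rewrite subn_eq0 => H0; apply/eqP; rewrite eqn_leq H0 andbT; exact: Hle.
pose Ev := [set x : 'I_n | ~~ odd x].
have HEv : 2 %| #|Ev|.
  rewrite (card_partition_col c); apply: dvdn_sum => i _.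
  case: (pickP [pred x | (x \in Ev) && (c x == i)]) => [x0 /andP [Hx0 Hc0]|Hn0].
    have -> : [set x in Ev | c x == i] = [set x in [set: 'I_n] | c x == i].
      apply/setP => y; rewrite !inE; case Hy: (c y == i); rewrite ?andbF ?andbT //.
      have [v Hv] := class_dom i.
      move: Hx0; rewrite inE (adj_odd Hne (Hv _ Hy)) (adj_odd Hne (Hv _ Hc0)).
      by [].
    by rewrite Hall.
  suff -> : [set x in Ev | c x == i] = set0 by rewrite cards0.
  by apply/setP => y; rewrite !inE; have := Hn0 y; rewrite /= inE.
have HEv2 : #|Ev| = n.+1 %/ 2.
  rewrite -(cnt_even n) -sum1_card big_mkcond /=.
  by apply: eq_bigr => i _; rewrite inE; case: (odd i).
move: HEv; rewrite HEv2; lia.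
Qed.

End Col.

End Cycle.

Definition g y := 2*(y %/ 4) + y %% 2.
Definition f m := (m+2) %/ 4 + (m+3) %/ 4.
Definition h P y := if y < P then g y else f P + g (y - P).
Lemma g_lt y m : y < m -> g y < f m. Proof. rewrite /g /f. lia. Qed.
Lemma g_last n : 3 < n -> g n.-1 != 0. Proof. rewrite /g. move=>*; apply/eqP; lia. Qed.
Lemma f_sum2 n P : n %% 4 = 2 -> P <= n -> f P + f (n - P) <= f n. Proof. rewrite /f. lia. Qed.
Lemma f_LB n k : n <= 2 * k -> (n %% 4 = 2 -> n <> 2 * k) -> f n <= k. Proof. rewrite /f. lia. Qed.
Lemma f_ch n k : n %% 4 <> 2 -> n + 2 <= 2 * k -> f n < k. Proof. rewrite /f. lia. Qed.
Lemma f_ch2 n k : n %% 4 = 2 -> n + 4 <= 2 * k -> f n < k. Proof. rewrite /f. lia. Qed.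
Lemma f_ltn n : 3 < n -> f n < n. Proof. rewrite /f. lia. Qed.
Lemma f0 : f 0 = 0. Proof. by []. Qed.

Lemma h_lt n P y : y < n -> P <= n -> h P y < f P + f (n - P).
Proof.
rewrite /h; case: ifP => H Hy HP.
  by apply: (leq_trans (g_lt H)); rewrite leq_addr.
rewrite ltn_add2l; apply: g_lt; lia.
Qed.

Lemma h_succ P y : y.+1 != P -> h P y != h P y.+1.
Proof. rewrite /h /g; case: ifP; case: ifP; move=> *; apply/eqP; lia. Qed.

Lemma h_eq P y y' : h P y = h P y' ->
  y = y' \/ (y' = y + 2 /\ y.+1 <> P /\ y + 2 <> P) \/ (y = y' + 2 /\ y'.+1 <> P /\ y' + 2 <> P).
Proof. rewrite /h /g /f; case: ifP; case: ifP; lia. Qed.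

Section Pos.
Variables (n : nat) (i : 'I_n).
Hypothesis n3 : 3 < n.
Definition pos (x : 'I_n) := (x + (n - 1 - i)) %% n.
Let n0 : 0 < n. Proof. lia. Qed.

Lemma pos_lt x : pos x < n.
Proof. exact: ltn_pmod. Qed.

Lemma pos_inj x y : pos x = pos y -> x = y.
Proof.
move/eqP; rewrite /pos eqn_modDr => /eqP; rewrite !modn_small //.
exact: val_inj.
Qed.

Lemma pos_i : pos i = n.-1.
Proof.
rewrite /pos modn_small; have := ltn_ord i; lia.
Qed.

Lemma pos_ordS x : (pos x = n.-1 /\ pos (ordS x) = 0) \/
                   (pos x < n.-1 /\ pos (ordS x) = (pos x).+1).
Proof.
have E1 : pos (ordS x) = (pos x).+1 %% n.
  by rewrite /pos /= modnDml addSn -addn1 -modnDml addn1.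
rewrite E1; have := pos_lt x.
case: (ltngtP (pos x).+1 n) => H1 H2.
- by right; rewrite modn_small //; lia.
- lia.
- by left; rewrite H1 modnn; lia.
Qed.

Lemma pos_surj p : p < n -> exists x, pos x = p.
Proof.
move=> Hp; exists (Ordinal (ltn_pmod (p + i + 1) n0)).
rewrite /pos /= modnDml.
have -> : p + i + 1 + (n - 1 - i) = p + n by have := ltn_ord i; lia.
by rewrite modnDr modn_small.
Qed.

Section UB.
Variable P : nat.
Hypothesis HP : P <= n.
Variable G : {set {set 'I_n}}.
Hypothesis HG : G \subset cycle_edges n.
Hypothesis Hin : forall j : 'I_n, pos j != n.-1 -> (pos j).+1 != P -> [set j; ordS j] \in G.
Hypothesis Hprop : forall j : 'I_n, [set j; ordS j] \in G -> h P (pos j) != h P (pos (ordS j)).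
Hypothesis Hiso : no_isolated G.

Lemma UB : dom_colorable G (f P + f (n - P)).
Proof.
have hlt x : h P (pos x) < f P + f (n - P) by apply: h_lt => //; apply: pos_lt.
apply/existsP; exists [ffun x => Ordinal (hlt x)].
have cE x : val ([ffun x => Ordinal (hlt x)] x) = h P (pos x) by rewrite ffunE.
set c := [ffun x => _] in cE *.
apply/andP; split.
  apply/forallP => x; apply/forallP => y; apply/implyP => Hadj.
  apply/negP => /eqP /(congr1 val); rewrite !cE.
  case: (adj_sub HG Hadj) => Hxy.
    subst y; case/andP: Hadj => _ /Hprop /eqP; exact.
  subst x; case/andP: Hadj => _; rewrite setUC => /Hprop /eqP H1 H2.
  exact: H1 (esym H2).
apply/forallP => ii.
case: (pickP (fun x => c x == ii)) => [x0 Hx0|Hnone]; last first.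
  by apply/existsP; exists i; apply/forallP => x; rewrite Hnone.
have center : forall a b : 'I_n, h P (pos a) = h P (pos b) -> pos b = pos a + 2 ->
    c a == ii -> [exists v, [forall x, (c x == ii) ==> adj G v x]].
  move=> a b Hab Hb Ha.
  have Hbn := pos_lt b.
  have [Hc1 Hc2] : (pos a).+1 <> P /\ pos a + 2 <> P.
    case: (h_eq Hab) => [|[]]; lia.
  have Hlt : (pos a).+1 < n by lia.
  have [v Hv] := pos_surj Hlt.
  have Hav : ordS a = v.
    apply: pos_inj; rewrite Hv; case: (pos_ordS a); lia.
  have Hvb : ordS v = b.
    apply: pos_inj; rewrite Hb; case: (pos_ordS v); lia.
  apply/existsP; exists v; apply/forallP => x; apply/implyP => Hx.
  have Hxa : h P (pos x) = h P (pos a).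
    by move: (congr1 val (eqP Hx)) (congr1 val (eqP Ha)); rewrite !cE => -> ->.
  have Hxb : h P (pos x) = h P (pos b) by rewrite Hxa.
  have Hxn := pos_lt x.
  have : pos x = pos a \/ pos x = pos b.
    case: (h_eq Hxa) => [|[]]; case: (h_eq Hxb) => [|[]]; lia.
  case=> /pos_inj ->; apply/andP; split.
  - apply/eqP => Hva; move: (congr1 pos Hva); lia.
  - rewrite setUC -Hav; apply: Hin; apply/eqP; lia.
  - apply/eqP => Hva; move: (congr1 pos Hva); lia.
  - rewrite -Hvb; apply: Hin; apply/eqP; lia.
case: (pickP (fun x => (c x == ii) && (x != x0))) => [x1 /andP [Hx1 Hne]|Hsing]; last first.
  case/existsP: (forallP Hiso x0) => w Hw.
  apply/existsP; exists w; apply/forallP => x; apply/implyP => Hx.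
  have := Hsing x; rewrite Hx /= => /negbFE /eqP ->.
  by rewrite adj_sym.
have Hh : h P (pos x0) = h P (pos x1).
  by move: (congr1 val (eqP Hx0)) (congr1 val (eqP Hx1)); rewrite !cE => -> ->.
have := pos_lt x0; have := pos_lt x1.
case: (h_eq Hh) => [/pos_inj E01|[[H1 _]|[H1 _]]].
- by rewrite E01 eqxx in Hne.
- move=> *; exact: center Hh H1 Hx0.
- move=> *; exact: center (esym Hh) H1 Hx1.
Qed.
End UB.
End Pos.

Section Main.
Variable n : nat.
Hypothesis n3 : 3 < n.
Let n2 : 2 < n. Proof. lia. Qed.
Local Notation E := (cycle_edges n).

Lemma LBf (G : {set {set 'I_n}}) k : G \subset E -> dom_colorable G k -> f n <= k.
Proof.
move=> HG /existsP [c Hc].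
apply: f_LB; last exact: (LB_par n2 HG Hc).
have := LB (X := set0) HG Hc; rewrite cards0 addn0; apply.
by move=> x y; rewrite inE.
Qed.

Lemma Hprop_gen (i : 'I_n) P (j : 'I_n) : pos i j != n.-1 -> (pos i j).+1 != P ->
  h P (pos i j) != h P (pos i (ordS j)).
Proof.
move=> H1 H2; case: (pos_ordS i n3 j) => [[A _]|[_ ->]]; first by rewrite A eqxx in H1.
exact: h_succ.
Qed.

Lemma noisoE : no_isolated E.
Proof.
apply/forallP => x; apply/existsP; exists (ordS x); apply/andP; split.
  exact: ordS_neq.
exact: ed_in_E.
Qed.

Lemma chiE : chi_dom E = f n.
Proof.
have i0 : 'I_n by exists 0; lia.
apply: chi_dom_eq; last first.
- by move=> k; apply: LBf.
- by rewrite card_ord; apply: ltnW; apply: f_ltn.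
have := UB (i := i0) n3 (leqnn n) (subxx E) _ _ noisoE.
rewrite subnn f0 addn0; apply.
  by move=> j _ _; apply: ed_in_E.
move=> j _; case: (pos_ordS i0 n3 j) => [[A B]|[A _]].
  rewrite A B /h ifT; last by lia.
  rewrite ifT; last by lia.
  have -> : g 0 = 0 by [].
  exact: g_last.
by apply: Hprop_gen; apply/eqP; lia.
Qed.

Lemma nochange i P (F : {set {set 'I_n}}) :
  P <= n ->
  (forall j, (ed j \in F) = (pos i j == n.-1) || ((pos i j).+1 == P)) ->
  no_isolated (E :\: F) -> f P + f (n - P) <= f n -> chi_dom (E :\: F) = f n.
Proof.
move=> HP HF Hiso Hle.
have HG : E :\: F \subset E by apply: subsetDl.
have Hcol := UB (i := i) n3 HP HG _ _ Hiso.
have Hcol' : dom_colorable (E :\: F) (f P + f (n - P)).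
  apply: Hcol.
    move=> j H1 H2; rewrite in_setD ed_in_E andbT.
    by move: (HF j); rewrite /ed => ->; rewrite negb_or H1 H2.
  move=> j; rewrite in_setD => /andP [HnF _].
  move: HnF (HF j); rewrite /ed => HnF; rewrite (negbTE HnF).
  by move/esym/norP => [H1 H2]; apply: Hprop_gen.
have Hge := LBf HG Hcol'.
have Hk : f P + f (n - P) = f n by apply/eqP; rewrite eqn_leq Hle Hge.
rewrite Hk in Hcol'.
apply: chi_dom_eq => //; last by move=> k; apply: LBf.
by rewrite card_ord; apply: ltnW; apply: f_ltn.
Qed.

Lemma pos_eq (i j j' : 'I_n) : (j == j') = (pos i j == pos i j').
Proof. by apply/eqP/eqP => [->|/pos_inj]. Qed.

Lemma nochange1 (F : {set {set 'I_n}}) :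
  F \subset E -> #|F| = 1 -> no_isolated (E :\: F) -> chi_dom (E :\: F) = f n.
Proof.
move=> HFE /eqP /cards1P [A HA] Hiso; subst F.
have /imsetP [i _ HA] : A \in E by apply: (subsetP HFE); rewrite set11.
subst A.
apply: (nochange (i := i) (P := n)) => //; last by rewrite subnn f0 addn0.
move=> j; rewrite in_set1 -[_ == _]/(ed j == ed i) (inj_eq (ed_inj n2)).
rewrite (pos_eq i) (pos_i i n3); have := pos_lt i n3 j.
case: eqP => H; case: eqP => H' //= ?; exfalso; lia.
Qed.

Lemma nochange2 (F : {set {set 'I_n}}) : n %% 4 = 2 ->
  F \subset E -> #|F| = 2 -> no_isolated (E :\: F) -> chi_dom (E :\: F) = f n.
Proof.
move=> H4 HFE /eqP /cards2P [A [B [HAB HF]]] Hiso; subst F.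
have /imsetP [i _ HA] : A \in E by apply: (subsetP HFE); rewrite set21.
have /imsetP [i' _ HB] : B \in E by apply: (subsetP HFE); rewrite set22.
subst A B.
apply: (nochange (i := i) (P := (pos i i').+1)) => //.
- exact: pos_lt.
- move=> j; rewrite in_set2 -/(ed j) -/(ed i) -/(ed i') !(inj_eq (ed_inj n2)).
  by rewrite !(pos_eq i) (pos_i i n3) eqSS.
- by apply: f_sum2 => //; apply: pos_lt.
Qed.


Lemma adjD (F : {set {set 'I_n}}) v x : adj (E :\: F) v x ->
  (x = ordS v /\ ed v \notin F) \/ (v = ordS x /\ ed x \notin F).
Proof.
move=> H; have := adj_sub (subsetDl E F) H.
case/andP: H => _; rewrite in_setD => /andP [HnF _].
case=> Hxy; subst.
  by left.
by right; split => //; rewrite /ed setUC.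
Qed.

Lemma single (G : {set {set 'I_n}}) k (c : {ffun 'I_n -> 'I_k}) x y :
  dominated_coloring G c -> (forall v, adj G v x -> v = y) ->
  (forall z, adj G y z -> z = x) -> forall z, c z = c x -> z = x.
Proof.
move=> Hc H1 H2 z Hz.
have [v Hv] := class_dom Hc (c x).
have Hvy : v = y by apply: H1; apply: Hv.
subst v; apply: H2; apply: Hv; rewrite Hz.
by [].
Qed.

Lemma pair_single (F : {set {set 'I_n}}) k (c : {ffun 'I_n -> 'I_k}) b :
  ed b \in F -> ed (ordS (ordS b)) \in F -> dominated_coloring (E :\: F) c ->
  (forall z, c z = c (ordS b) -> z = ordS b) /\
  (forall z, c z = c (ordS (ordS b)) -> z = ordS (ordS b)).
Proof.
move=> Hb Hb2 Hc; split; apply: (single Hc).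
- move=> v /adjD [[/ordS_inj Ev H]|[-> _]] //; by rewrite -Ev Hb in H.
- move=> z /adjD [[_ H]|[/ordS_inj Ez _]]; [by rewrite Hb2 in H | by rewrite -Ez].
- move=> v /adjD [[/ordS_inj Ev _]|[_ H]]; [by rewrite -Ev | by rewrite Hb2 in H].
- move=> z /adjD [[-> _]|[/ordS_inj Ez H]] //; by rewrite -Ez Hb in H.
Qed.

Lemma noiso (F : {set {set 'I_n}}) :
  (forall y, ed (ordS y) \in F -> ed y \notin F) -> no_isolated (E :\: F).
Proof.
move=> HF; apply/forallP => x; apply/existsP.
case Hx: (ed x \in F).
  exists (ord_pred x); apply/andP; split.
    apply/eqP => Hxp; have := ordS_neq n2 (ord_pred x).
    by rewrite ord_predK -Hxp eqxx.
  have -> : [set x; ord_pred x] = ed (ord_pred x) by rewrite /ed ord_predK setUC.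
  rewrite in_setD ed_in_E andbT.
  by apply: HF; rewrite ord_predK.
exists (ordS x); apply/andP; split; first exact: ordS_neq.
by rewrite in_setD Hx ed_in_E.
Qed.

Lemma cardX s : s <= n -> #|[set x : 'I_n | x < s]| = s.
Proof.
move=> Hs.
have -> : [set x : 'I_n | x < s] = [set widen_ord Hs y | y in 'I_s].
  apply/setP => x; rewrite inE; apply/idP/imsetP.
    by move=> Hx; exists (Ordinal Hx) => //; apply: val_inj.
  by case=> y _ ->; rewrite /= ltn_ord.
rewrite card_imset ?card_ord //.
by move=> a b /(congr1 val) /= /val_inj.
Qed.

Lemma change (F : {set {set 'I_n}}) s : s <= n ->
  (forall x : 'I_n, x < s -> exists b, [/\ ed b \in F, ed (ordS (ordS b)) \in F &
       (x = ordS b \/ x = ordS (ordS b))]) ->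
  (forall k, n + s <= 2 * k -> f n < k) -> chi_dom (E :\: F) != f n.
Proof.
move=> Hs HX Hf; apply/eqP => Hch.
have Hlt : chi_dom (E :\: F) < #|'I_n| by rewrite Hch card_ord f_ltn.
have := chi_dom_col Hlt; rewrite Hch => /existsP [c Hc].
have := LB (X := [set x : 'I_n | x < s]) (subsetDl E F) Hc.
rewrite cardX // => H.
suff : f n < f n by rewrite ltnn.
apply: Hf; apply: H => x y; rewrite inE => /HX [b [H1 H2 Hxb]].
have [S1 S2] := pair_single H1 H2 Hc.
by case: Hxb => ->; [apply: S1 | apply: S2].
Qed.

End Main.

Section Cons.
Variable n : nat.
Hypothesis n3 : 3 < n.
Let n2 : 2 < n. Proof. lia. Qed.
Let n0 : 0 < n. Proof. lia. Qed.
Local Notation E := (cycle_edges n).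
Definition oo k : 'I_n := insubd (Ordinal n0) k.
Lemma ooK k : k < n -> val (oo k) = k.
Proof. by move=> H; rewrite val_insubd H. Qed.

Lemma memF a b j : a < n -> b < n ->
  (ed j \in [set ed (oo a); ed (oo b)]) = (val j == a) || (val j == b).
Proof. by move=> Ha Hb; rewrite in_set2 !(inj_eq (ed_inj n2)) -!val_eqE /= !ooK. Qed.

Lemma memF3 a b c j : a < n -> b < n -> c < n ->
  (ed j \in [set ed (oo a); ed (oo b); ed (oo c)]) = [|| val j == a, val j == b | val j == c].
Proof. by move=> Ha Hb Hc; rewrite !inE !(inj_eq (ed_inj n2)) -!val_eqE /= !ooK // -orbA. Qed.

Lemma ex2 : n %% 4 != 2 -> exists F, dom_changing E F /\ #|F| = 2.
Proof.
move=> H4.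
have Hl : n.-1 < n by lia.
have H1 : 1 < n by lia.
exists [set ed (oo n.-1); ed (oo 1)]; split; last first.
  by rewrite cards2 (inj_eq (ed_inj n2)) -val_eqE /= !ooK //; apply/eqP; lia.
apply/and3P; split.
- by apply/subsetP => A; rewrite in_set2 => /orP [] /eqP ->; apply: ed_in_E.
- apply: noiso => // y; rewrite !memF //.
  have := ltn_ord y; case: (ordS_cases n2 y) => -[A ->] Hy /=;
  move=> /orP [] /eqP ? ; apply/negP => /orP [] /eqP ?; lia.
- rewrite chiE //; apply: (change n3 (s := 2)) => //.
    move=> x Hx; exists (oo n.-1).
    have V1 : val (ordS (oo n.-1)) = 0 by case: (ordS_cases n2 (oo n.-1)); rewrite ooK //; lia.
    have V2 : val (ordS (ordS (oo n.-1))) = 1.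
      by case: (ordS_cases n2 (ordS (oo n.-1))); rewrite V1; lia.
    split; rewrite ?memF ?ooK ?V2 ?eqxx ?orbT //.
    case: (ltngtP x 1) => Hx1.
      by left; apply: val_inj; rewrite V1 /=; lia.
      lia.
    by right; apply: val_inj; rewrite V2.
  move=> k Hk; apply: f_ch => //; by apply/eqP.
Qed.

Lemma ex3 : n %% 4 = 2 -> exists F, dom_changing E F /\ #|F| = 3.
Proof.
move=> H4.
have Hl : n.-1 < n by lia.
have H1 : 1 < n by lia.
have H3 : 3 < n by lia.
exists [set ed (oo n.-1); ed (oo 1); ed (oo 3)]; split; last first.
  rewrite setUC cardsU1 cards2 !inE !(inj_eq (ed_inj n2)) -!val_eqE /= !ooK //.
  have -> : (n.-1 == 1) = false by apply/eqP; lia.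
  have -> : (3 == n.-1) = false by apply/eqP; lia.
  done.
apply/and3P; split.
- by apply/subsetP => A; rewrite !inE => /orP [/orP [] |] /eqP ->; apply: ed_in_E.
- apply: noiso => // y; rewrite !memF3 //.
  have := ltn_ord y; case: (ordS_cases n2 y) => -[A ->] Hy /=;
  repeat (case: eqP => ?); try done; exfalso; lia.
- rewrite chiE //; apply: (change n3 (s := 4)) => //.
    have V1 : val (ordS (oo n.-1)) = 0 by case: (ordS_cases n2 (oo n.-1)); rewrite ooK //; lia.
    have V2 : val (ordS (ordS (oo n.-1))) = 1.
      by case: (ordS_cases n2 (ordS (oo n.-1))); rewrite V1; lia.
    have W1 : val (ordS (oo 1)) = 2 by case: (ordS_cases n2 (oo 1)); rewrite ooK //; lia.
    have W2 : val (ordS (ordS (oo 1))) = 3.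
      by case: (ordS_cases n2 (ordS (oo 1))); rewrite W1; lia.
    move=> x Hx; case: (ltnP x 2) => Hx2.
      exists (oo n.-1).
      split; rewrite ?memF3 ?ooK ?V2 ?eqxx ?orbT //.
      case: (ltngtP x 1) => Hx1.
      - by left; apply: val_inj; rewrite V1 /=; lia.
      - lia.
      - by right; apply: val_inj; rewrite V2.
    exists (oo 1).
    split; rewrite ?memF3 ?ooK ?W2 ?eqxx ?orbT //.
    case: (ltngtP x 3) => Hx1.
    - by left; apply: val_inj; rewrite W1 /=; lia.
    - lia.
    - by right; apply: val_inj; rewrite W2.
  move=> k Hk; exact: f_ch2.
Qed.
End Cons.

Unset Implicit Arguments.

Theorem mainTheorem14 (n : nat) (hn : 4 <= n) :
  is_dom_bondage (cycle_edges n) (if n %% 4 == 2 then 3 else 2).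
Proof.
have n3 : 3 < n := hn.
split.
  case: ifP => H4.
    by apply: ex3 => //; apply/eqP.
  by apply: ex2 => //; rewrite H4.
move=> F /and3P [HFE Hiso Hch].
rewrite leqNgt; apply/negP => Hlt.
rewrite (chiE n3) in Hch.
have : [\/ #|F| = 0, #|F| = 1 | n %% 4 = 2 /\ #|F| = 2].
  move: Hlt; case: ifP => [/eqP H4|_] Hlt.
    case: (ltngtP #|F| 1) => H; [by constructor 1; lia|by constructor 3; lia|by constructor 2].
  case: (ltngtP #|F| 1) => H; [by constructor 1; lia|lia|by constructor 2].
case=> [/cards0_eq HF|HF|[H4 HF]].
- by move: Hch; rewrite HF setD0 (chiE n3) eqxx.
- by move: Hch; rewrite (nochange1 n3 HFE HF Hiso) eqxx.
- by move: Hch; rewrite (nochange2 n3 H4 HFE HF Hiso) eqxx.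
Qed.
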